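(* Let $n\ge1$, let $R,H\subseteq\{0,1,\dots,n-1\}$, $S_1=\{a^{2r},\ a^{2r}b,\ a^{-2r}b^2\mid r\in R\}$ and $S_2=\{a^{2h+1},\ a^{2h+1}b,\ a^{2h+1}b^2\mid h\in H\}$, such that $S=S_1\cup S_2\subseteq U_{6n}$ satisfies $1\notin S=S^{-1}$. Put $S_R=\{a^{2r}\mid r\in R\}$ and $S_H=\{a^{2h+1}\mid h\in H\}$. Then $\mathrm{Cay}(U_{6n},S)$ is integral if and only if both of the following hold: (1) $S_R\cup S_H\in B(\langle a\rangle)$; (2) $2\psi_k(S_2^2)$ is a perfect square (the square of an integer) for every $0\le k\le n-1$.
   Context: For an integer $n\ge1$, $U_{6n}=\langle a,b\mid a^{2n}=b^3=1,\ a^{-1}ba=b^{-1}\rangle$, a group of order $6n$ whose elements are uniquely $a^ib^\epsilon$ with $0\le i\le 2n-1$, $\epsilon\in\{0,1,2\}$; $\langle a\rangle$ is cyclic of order $2n$. Let $\omega=\exp(\pi\imath/n)$. The degree-two irreducible characters $\psi_k$ ($0\le k\le n-1$) of $U_{6n}$ are given by $\psi_k(a^{2r})=2\omega^{2kr}$, $\psi_k(a^{2r}b)=\psi_k(a^{2r}b^2)=-\omega^{2kr}$, $\psi_k(a^{2r+1}b^\epsilon)=0$. For a character $\chi$ and a subset $A$, $\chi(A^2)=\sum_{x_1,x_2\in A}\chi(x_1x_2)$ over all ordered pairs. For a finite group $G$, the Boolean algebra $B(G)$ is the collection of subsets of $G$ obtainable from the subgroups of $G$ by finitely many unions, intersections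 and complements (in $G$). For a group $G$ and $S\subseteq G$ with $1\notin S=S^{-1}$, the Cayley graph $\mathrm{Cay}(G,S)$ has vertex set $G$ and edges $\{g,sg\}$ for $g\in G,s\in S$. A graph is integral if all eigenvalues of its adjacency matrix are integers. *)

(* Defs.v *)
From HB Require Import structures.
From mathcomp Require Import all_boot all_order all_algebra all_fingroup all_field all_character.
Set Implicit Arguments. Unset Strict Implicit. Unset Printing Implicit Defensive.
Import Order.TTheory GRing.Theory Num.Theory.

(* The group U_{6n} = < a, b | a^{2n} = b^3 = 1, a^-1 b a = b^-1 >,         *)
(* realised concretely on pairs (i, e) in Z_{2n} x Z_3 standing for a^i b^e *)
(* with  (a^i b^e)(a^j b^f) = a^(i+j) b^((-1)^j e + f).                      *)

Definition U6 (n : nat) : Type := ('Z_(n.*2) * 'Z_3)%type.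

HB.instance Definition _ n := Finite.on (U6 n).

Section U6Group.
Variable n : nat.
Local Open Scope ring_scope.

Definition U6sg (j : 'Z_(n.*2)) (e : 'Z_3) : 'Z_3 :=
  if odd (val j) then - e else e.

Definition U6mul (x y : U6 n) : U6 n := (x.1 + y.1, U6sg y.1 x.2 + y.2).
Definition U6one : U6 n := (0, 0).
Definition U6inv (x : U6 n) : U6 n := (- x.1, - U6sg x.1 x.2).

Lemma U6_mod_even : odd (Zp_trunc (n.*2)).+2 = false.
Proof. by rewrite /Zp_trunc; case: n => [|m] //=; rewrite odd_double. Qed.

Lemma U6_oddD (j k : 'Z_(n.*2)) : odd (val (j + k)) = odd (val j) (+) odd (val k).
Proof. by rewrite /= odd_mod ?U6_mod_even // oddD. Qed.

Lemma U6sgD j k e : U6sg (j + k) e = U6sg k (U6sg j e).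
Proof.
rewrite /U6sg U6_oddD.
by case: (odd (val j)); case: (odd (val k)) => //=; rewrite opprK.
Qed.

Lemma U6sgDe j e f : U6sg j (e + f) = U6sg j e + U6sg j f.
Proof. by rewrite /U6sg; case: ifP => // _; rewrite opprD. Qed.

Lemma U6mulA : associative U6mul.
Proof.
move=> [i e] [j f] [k g]; rewrite /U6mul /=.
by rewrite addrA U6sgDe U6sgD addrA.
Qed.

Lemma U6mul1 : left_id U6one U6mul.
Proof.
move=> [i e]; rewrite /U6mul /U6one /= add0r.
by rewrite /U6sg; case: ifP; rewrite ?oppr0 add0r.
Qed.

Lemma U6mulV : left_inverse U6one U6inv U6mul.
Proof.
move=> [i e]; rewrite /U6mul /U6inv /U6one /= addNr.
by rewrite /U6sg; case: (odd (val i)); rewrite ?opprK ?addrN ?addNr.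
Qed.

HB.instance Definition _ := Finite_isGroup.Build (U6 n) U6mulA U6mul1 U6mulV.

End U6Group.

Definition U6a (n : nat) : U6 n := (1%R, 0%R).
Definition U6b (n : nat) : U6 n := (0%R, 1%R).

Local Open Scope ring_scope.

Inductive inB {gT : finGroupType} (G : {set gT}) : {set gT} -> Prop :=
  | inB_subgroup (K : {group gT}) : K \subset G -> inB G K
  | inB_union A B : inB G A -> inB G B -> inB G (A :|: B)
  | inB_inter A B : inB G A -> inB G B -> inB G (A :&: B)
  | inB_compl A : inB G A -> inB G (G :\: A).

Definition cayley_adj {gT : finGroupType} (S : {set gT}) : 'M[algC]_(#|gT|) :=
  \matrix_(i, j) ((enum_val j * (enum_val i)^-1)%g \in S)%:R.

Definition integral_graph {m : nat} (A : 'M[algC]_m) : Prop :=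
  forall x : algC, eigenvalue A x -> x \in Num.int.

(* omega = exp(pi i / n): the primitive 2n-th root of unity with minimal    *)
(* positive argument, i.e. n.-root (-1) in algC.                            *)
Definition U6omega (n : nat) : algC := n.-root (-1).

Definition U6psi (n k : nat) (x : U6 n) : algC :=
  let i := val x.1 in
  if odd i then 0
  else if x.2 == 0%R then 2 * U6omega n ^+ (2 * k * i./2)
  else - U6omega n ^+ (2 * k * i./2).

Definition char_sq {gT : finGroupType} (chi : gT -> algC) (A : {set gT}) : algC :=
  \sum_(x1 in A) \sum_(x2 in A) chi (x1 * x2)%g.

(* Main.v *)
Require Import Defs.
From HB Require Import structures.
From mathcomp Require Import all_boot all_order all_algebra all_fingroup all_field all_character.
From mathcomp Require Import ring cyclic.
Set Implicit Arguments. Unset Strict Implicit. Unset Printing Implicit Defensive.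
Import Order.TTheory GRing.Theory Num.Theory.

Module Helpers.
Local Open Scope ring_scope.

Lemma geo_gen (z : algC) k : (z - 1) * \sum_(j < k) z ^+ j = z ^+ k - 1.
Proof.
elim: k => [|k IH]; first by rewrite big_ord0 mulr0 expr0 subrr.
by rewrite big_ord_recr /= mulrDr IH exprS; ring.
Qed.

Lemma geo0 (z : algC) k : z ^+ k = 1 -> z != 1 -> \sum_(j < k) z ^+ j = 0.
Proof.
move=> zk z1; have := geo_gen z k; rewrite zk subrr => /eqP.
by rewrite mulf_eq0 subr_eq0 (negPf z1) /= => /eqP.
Qed.

Definition zN (n : nat) : algC := sval (C_prim_root_exists (ltn0Sn (n.*2).-1)).

Section Eps.
Variable n : nat.
Hypothesis hn : (0 < n)%N.
Local Notation N := (n.*2).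

Lemma N_gt1 : (1 < N)%N.
Proof. by case: n hn => // m _; rewrite doubleS. Qed.

Lemma zN_prim : N.-primitive_root (zN n).
Proof.
rewrite /zN; case: (C_prim_root_exists _) => z /=.
by rewrite prednK // double_gt0.
Qed.

Lemma ZN_cast : (Zp_trunc N).+2 = N.
Proof. exact: Zp_cast N_gt1. Qed.

Lemma ltZN (i : 'Z_N) : (val i < N)%N.
Proof. have := ltn_ord i; by rewrite [X in (_ < X)%N -> _]ZN_cast. Qed.

Definition eps (i : 'Z_N) : algC := zN n ^+ val i.

Lemma epsD i j : eps (i + j) = eps i * eps j.
Proof.
have zp : ((Zp_trunc N).+2).-primitive_root (zN n) by rewrite ZN_cast; exact: zN_prim.
by rewrite /eps -exprD /= (prim_expr_mod zp).
Qed.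

Lemma eps0 : eps 0 = 1.
Proof. by rewrite /eps expr0. Qed.

Lemma epsN i : eps (- i) * eps i = 1.
Proof. by rewrite -epsD addNr eps0. Qed.

Lemma eps_neq0 i : eps i != 0.
Proof. by apply/eqP => e0; have := epsN i; rewrite e0 mulr0 => /eqP; rewrite eq_sym oner_eq0. Qed.

Lemma eps_exp i : eps i ^+ N = 1.
Proof. by rewrite /eps exprAC (prim_expr_order zN_prim) expr1n. Qed.

Lemma eps_eq1 i : (eps i == 1) = (i == 0).
Proof.
rewrite /eps -(prim_order_dvd zN_prim); apply/idP/eqP => [|->]; last by rewrite dvdn0.
move=> dv; apply: val_inj => /=; case: (posnP (val i)) => // pos.
have := dvdn_leq pos dv; have := ltZN i => a b.
by have := leq_ltn_trans b a; rewrite ltnn.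
Qed.

Lemma geo i : \sum_(j < N) eps i ^+ j = if i == 0 then N%:R else 0.
Proof.
case: eqP => [->|/eqP i0]; first by rewrite eps0 (eq_bigr (fun _ => 1)) ?sumr_const ?card_ord // => j _; rewrite expr1n.
by apply: geo0; [exact: eps_exp | rewrite eps_eq1].
Qed.

End Eps.


Section Spec.
Variable n : nat.
Hypothesis hn : (0 < n)%N.
Local Notation N := (n.*2).
Local Notation eps := (@eps n).

Lemma sumU6 (f : U6 n -> algC) :
  \sum_(g : U6 n) f g = \sum_(i : 'Z_N) \sum_(e : 'Z_3) f (i, e).
Proof. rewrite pair_bigA /=. by apply: eq_bigr => -[]. Qed.

Lemma sum_enum (f : U6 n -> algC) :
  \sum_(i < #|{: U6 n}|) f (enum_val i) = \sum_(g : U6 n) f g.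
Proof. by rewrite -big_enum_val; apply: eq_bigl. Qed.

Lemma sum_shift (f : 'Z_N -> algC) c : \sum_(i : 'Z_N) f i = \sum_(m : 'Z_N) f (m + c).
Proof. by rewrite (reindex_inj (addIr c)). Qed.

Lemma sum_refl (f : 'Z_N -> algC) c : \sum_(i : 'Z_N) f i = \sum_(m : 'Z_N) f (c - m).
Proof.
have inj : injective (fun m : 'Z_N => c - m) by move=> x y /addrI /oppr_inj.
by rewrite (reindex_inj inj).
Qed.

Variable S : {set U6 n}.
Variable P : pred 'Z_N.
Hypothesis hSP : forall g : U6 n, (g \in S) = P g.1.

Definition lam (j : nat) : algC := 3%:R * \sum_(m : 'Z_N) (P m)%:R * eps m ^+ j.

Lemma adjE i k : cayley_adj S i k = (P ((enum_val k).1 - (enum_val i).1))%:R.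
Proof. by rewrite /cayley_adj mxE hSP. Qed.

Lemma sumZ3 (f : 'Z_N -> algC) : \sum_(g : U6 n) f g.1 = 3%:R * \sum_(i : 'Z_N) f i.
Proof.
rewrite sumU6 mulr_sumr; apply: eq_bigr => i _.
by rewrite /= big_const_ord iter_addr_0 mulr_natl.
Qed.

Lemma H1 (c : 'Z_N) j :
  \sum_(g : U6 n) (P (g.1 - c))%:R * eps g.1 ^+ j = eps c ^+ j * lam j.
Proof.
rewrite (sumZ3 (fun i => (P (i - c))%:R * eps i ^+ j)) (sum_shift _ c) /lam.
transitivity (3%:R * \sum_(m : 'Z_N) (eps c ^+ j * ((P m)%:R * eps m ^+ j))).
  by congr (_ * _); apply: eq_bigr => m _; rewrite addrK (epsD hn) exprMn; ring.
by rewrite -mulr_sumr mulrCA.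
Qed.

Lemma H2 (c : 'Z_N) j :
  \sum_(g : U6 n) (P (c - g.1))%:R * eps (- g.1) ^+ j = eps (- c) ^+ j * lam j.
Proof.
rewrite (sumZ3 (fun i => (P (c - i))%:R * eps (- i) ^+ j)) (sum_refl _ c) /lam.
transitivity (3%:R * \sum_(m : 'Z_N) (eps (- c) ^+ j * ((P m)%:R * eps m ^+ j))).
  congr (_ * _); apply: eq_bigr => m _.
  have -> : c - (c - m) = m by rewrite opprB addrCA subrr addr0.
  by rewrite opprB (epsD hn) exprMn; ring.
by rewrite -mulr_sumr mulrCA.
Qed.

Lemma eig_lam j : eigenvalue (cayley_adj S) (lam j).
Proof.
apply/eigenvalueP; exists (\row_k eps (- (enum_val k).1) ^+ j).
  apply/rowP => k; rewrite !mxE.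
  under eq_bigr do rewrite adjE mxE mulrC.
  rewrite (sum_enum (fun g => (P ((enum_val k).1 - g.1))%:R * eps (- g.1) ^+ j)).
  by rewrite H2 mulrC.
apply/eqP => /rowP /(_ (enum_rank (1%g : U6 n))); rewrite !mxE => /eqP.
by rewrite expf_eq0 (negPf (eps_neq0 hn _)) andbF.
Qed.

Lemma eig_cases x : eigenvalue (cayley_adj S) x ->
  x = 0 \/ exists j : 'I_N, x = lam j.
Proof.
case/eigenvalueP => v hv nz.
pose w g := v 0 (enum_rank g).
have Ew g' : x * w g' = \sum_(g : U6 n) w g * (P (g'.1 - g.1))%:R.
  have /rowP/(_ (enum_rank g')) := hv; rewrite !mxE => <-.
  rewrite -(sum_enum (fun g => w g * (P (g'.1 - g.1))%:R)).
  by apply: eq_bigr => i _; rewrite adjE enum_rankK /w enum_valK.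
have [x0|xnz] := eqVneq x 0; [by left | right].
case: (pickP (fun j : 'I_N => x == lam j)) => [j /eqP ->|hnot]; first by exists j.
exfalso; move/eqP: nz; apply.
pose V (j : nat) := \sum_(g : U6 n) w g * eps g.1 ^+ j.
have EV j : x * V j = lam j * V j.
  rewrite /V mulr_sumr.
  transitivity (\sum_(g' : U6 n) \sum_(g : U6 n) w g * (P (g'.1 - g.1))%:R * eps g'.1 ^+ j).
    by apply: eq_bigr => g' _; rewrite mulrA Ew mulr_suml.
  rewrite exchange_big mulr_sumr; apply: eq_bigr => g _.
  under eq_bigr do rewrite -mulrA.
  by rewrite -mulr_sumr H1; ring.
have V0 (j : 'I_N) : V j = 0.
  have := EV j; move/eqP; rewrite -subr_eq0 -mulrBl mulf_eq0 subr_eq0.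
  by rewrite hnot /= => /eqP.
have W0 i0 : \sum_(e : 'Z_3) w (i0, e) = 0.
  have : \sum_(j < N) V j * eps (- i0) ^+ j = N%:R * \sum_(e : 'Z_3) w (i0, e).
    rewrite /V; under eq_bigr do rewrite mulr_suml.
    rewrite exchange_big /=.
    transitivity (\sum_(g : U6 n) w g * (if g.1 - i0 == 0 then N%:R else 0)).
      apply: eq_bigr => g _; rewrite -(geo hn) mulr_sumr; apply: eq_bigr => j _.
      by rewrite (epsD hn) exprMn mulrA.
    rewrite sumU6 (bigD1 i0) //= [X in _ + X]big1 ?addr0.
      by rewrite subrr eqxx mulr_sumr; apply: eq_bigr => e _; rewrite mulrC.
    move=> i /negPf ne; apply: big1 => e _.
    by rewrite subr_eq0 ne mulr0.
  rewrite big1 ?mul0r; last by move=> j _; rewrite V0 mul0r.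
  move/eqP; rewrite eq_sym mulf_eq0 pnatr_eq0 double_eq0 eqn0Ngt hn /=.
  by move/eqP.
apply/rowP => k; rewrite mxE.
have : x * w (enum_val k) = 0.
  rewrite Ew sumU6; apply: big1 => i _.
  under eq_bigr do rewrite mulrC.
  by rewrite /= -mulr_sumr W0 mulr0.
by move/eqP; rewrite mulf_eq0 (negPf xnz) /= /w enum_valK => /eqP.
Qed.

End Spec.


Section BoolAlg.
Variable gT : finGroupType.
Variable G : {group gT}.

Definition cl_closed (X : {set gT}) :=
  forall x y, x \in X -> <[x]>%g = <[y]>%g -> y \in X.

Lemma inB_closed (X : {set gT}) : inB G X -> X \subset G /\ cl_closed X.
Proof.
elim=> [K sKG | A B _ [sA cA] _ [sB cB] | A B _ [sA cA] _ [sB cB] | A _ [sA cA]].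
- split=> // x y xK hxy; by rewrite -cycle_subG -hxy cycle_subG.
- split; first by rewrite subUset sA.
  by move=> x y; rewrite !inE => /orP[/cA H|/cB H] /H ->; rewrite ?orbT.
- split; first by rewrite subIset ?sA.
  by move=> x y; rewrite !inE => /andP[/cA H1 /cB H2] hxy; rewrite H1 ?H2.
- split; first by rewrite subsetDl.
  move=> x y; rewrite !inE => /andP[xA xG] hxy.
  have yG : y \in G by rewrite -cycle_subG -hxy cycle_subG.
  rewrite yG andbT; apply: contra xA => yA; exact: cA _ _ yA (esym hxy).
Qed.

Lemma inB_set0 : inB G set0.
Proof. by have := inB_compl (inB_subgroup (subxx G)); rewrite setDv. Qed.

Lemma inB_bigcup (I : finType) (P : pred I) (F : I -> {set gT}) :
  (forall i, P i -> inB G (F i)) -> inB G (\bigcup_(i | P i) F i).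
Proof.
move=> h; apply: (big_ind (inB G)) => //; first exact: inB_set0.
by move=> A B; apply: inB_union.
Qed.

Lemma inB_class x : x \in G -> inB G [set g | <[g]>%g == <[x]>%g].
Proof.
move=> xG.
have -> : [set g | <[g]>%g == <[x]>%g] =
   <[x]>%g :&: (G :\: \bigcup_(y in <[x]>%g | <[y]>%g != <[x]>%g) <[y]>%g).
  apply/setP => g; rewrite !inE; apply/idP/idP.
  - move/eqP => hg; have gx : g \in <[x]>%g by rewrite -hg cycle_id.
    rewrite gx /=; have -> : g \in G by rewrite -cycle_subG hg cycle_subG.
    rewrite andbT; apply/bigcupP => -[y /andP[yx ne] gy].
    move/negP: ne; apply; rewrite eqEsubset cycle_subG yx /=.
    by rewrite -hg cycle_subG.
  - case/and3P => gx nb gG; move: nb; apply: contraR => ne.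
    by apply/bigcupP; exists g; rewrite ?cycle_id // gx.
apply: inB_inter; first by apply: inB_subgroup; rewrite cycle_subG.
apply: inB_compl; apply: inB_bigcup => y /andP[yx _].
apply: inB_subgroup; rewrite cycle_subG; apply: (subsetP _ _ yx).
by rewrite cycle_subG.
Qed.

Lemma closed_inB (X : {set gT}) : X \subset G -> cl_closed X -> inB G X.
Proof.
move=> sXG cX.
have -> : X = \bigcup_(x in X) [set g | <[g]>%g == <[x]>%g].
  apply/setP => g; apply/idP/bigcupP => [gX|[x xX]].
    by exists g; rewrite // inE.
  by rewrite inE => /eqP hg; apply: cX _ _ xX (esym hg).
apply: inB_bigcup => x xX; apply: inB_class; exact: (subsetP sXG).
Qed.

End BoolAlg.


Section BM.
Variable n : nat.
Hypothesis hn : (0 < n)%N.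
Local Notation N := (n.*2).
Local Notation eps := (@eps n).

Definition ee (g : U6 n) := eps g.1.

Lemma eeM g h : ee (g * h)%g = ee g * ee h.
Proof. exact: epsD. Qed.

Lemma ee1 : ee 1%g = 1.
Proof. exact: eps0. Qed.

Lemma eeX g k : ee (g ^+ k)%g = ee g ^+ k.
Proof. elim: k => [|k IH]; first by rewrite expg0 ee1. by rewrite expgS eeM IH exprS. Qed.

Lemma U6sg0 (j : 'Z_N) : U6sg j (0 : 'Z_3) = 0.
Proof. by rewrite /U6sg; case: ifP; rewrite ?oppr0. Qed.

Lemma expa k : (U6a n ^+ k)%g = (k%:R, 0).
Proof.
elim: k => [|k IH]; first by [].
rewrite expgS IH; rewrite /U6a /=.
change (@U6mul n (1, 0) (k%:R, 0) = (k.+1%:R, 0)).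
by rewrite /U6mul /= U6sg0 addr0 mulrS.
Qed.

Local Notation G := <[U6a n]>%g.

Lemma inG2 g : g \in G -> g.2 = 0.
Proof. by case/cycleP => k ->; rewrite expa. Qed.

Lemma ee_eq1 g : g \in G -> (ee g == 1) = (g == 1%g).
Proof.
move=> gG; rewrite /ee (eps_eq1 hn); move: gG (inG2 gG); case: g => a b /= _ ->.
by apply/eqP/eqP => [->|[]].
Qed.

Variable X : {set U6 n}.
Definition FF (j : nat) := \sum_(x in X) ee x ^+ j.

Lemma BM1 g : X \subset G -> g \in G ->
  \sum_(j < N) FF j * ee (g^-1)%g ^+ j = N%:R * (g \in X)%:R.
Proof.
move=> sX gG; rewrite /FF; under eq_bigr do rewrite mulr_suml.
rewrite exchange_big /=.
transitivity (\sum_(x in X) (if x == g then N%:R else 0 : algC)).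
  apply: eq_bigr => x xX.
  have xG := subsetP sX _ xX.
  transitivity (\sum_(j < N) ee (x * g^-1)%g ^+ j).
    by apply: eq_bigr => j _; rewrite eeM exprMn.
  rewrite /ee (geo hn) -/(ee _) -(eps_eq1 hn) -/(ee _) ee_eq1 ?groupM ?groupV //.
  by rewrite -(inj_eq (mulIg g)) mulgKV mul1g.
case: (boolP (g \in X)) => gX.
  rewrite (bigD1 g) //= eqxx big1 ?addr0 ?mulr1 //.
  by move=> x /andP[_ /negPf ->].
rewrite mulr0 big1 // => x xX; case: eqP => // exg.
by move: gX; rewrite -exg xX.
Qed.

Lemma BM_closed : X \subset G -> (forall j : 'I_N, FF j \in Crat) -> cl_closed X.
Proof.
move=> sX hF x y xX hxy.
have xG := subsetP sX _ xX.
have yx : y \in <[x]>%g by rewrite hxy cycle_id.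
have yG : y \in G by apply: (subsetP _ _ yx); rewrite cycle_subG.
case/cycleP: yx => m ym.
have cop : coprime m #[x]%g.
  by rewrite coprime_sym -generator_coprime -ym /generator hxy.
have [u hu] := Qn_aut_exists cop.
have I1 := BM1 sX xG; have I2 := BM1 sX yG.
have hxm : u (ee (x^-1)%g) = ee (y^-1)%g.
  rewrite hu; first by rewrite -eeX expgVn -ym.
  by rewrite -eeX expgVn expg_order invg1 ee1.
have E : N%:R * (x \in X)%:R = N%:R * (y \in X)%:R :> algC.
  rewrite -I1 -I2.
  transitivity (u (\sum_(j < N) FF j * ee (x^-1)%g ^+ j)).
    by rewrite I1 rmorphM !rmorph_nat.
  rewrite rmorph_sum; apply: eq_bigr => j _.
  by rewrite rmorphM rmorphXn aut_Crat ?hF // hxm.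
move/eqP: E; rewrite xX (inj_eq (mulfI _)) ?pnatr_eq0 ?double_eq0 -?lt0n //.
by case: (y \in X); rewrite /= ?eqxx // oner_eq0.
Qed.

Lemma cyc_int j (x : U6 n) : \sum_(g in <[x]>%g) ee g ^+ j \in Num.int.
Proof.
set s := \sum_(g in _) _.
have cs : ee x ^+ j * s = s.
  rewrite /s mulr_sumr.
  rewrite [RHS](reindex_inj (mulgI x)) /=.
  apply: eq_big => [g|g _]; first by rewrite groupMl ?cycle_id.
  by rewrite eeM exprMn.
case: (eqVneq (ee x ^+ j) 1) => [c1|c1].
  rewrite /s (eq_bigr (fun _ => 1)) ?sumr_const ?rpred_nat //.
  by move=> g /cycleP[i ->]; rewrite eeX exprAC c1 expr1n.
have : (ee x ^+ j - 1) * s = 0 by rewrite mulrBl cs mul1r subrr.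
move/eqP; rewrite mulf_eq0 subr_eq0 (negPf c1) /= => /eqP ->.
exact: rpred0.
Qed.

Lemma class_int j k (x : U6 n) : (#[x]%g <= k)%N ->
  \sum_(g | <[g]>%g == <[x]>%g) ee g ^+ j \in Num.int.
Proof.
elim: k x => [|k IH] x ox.
  by move: ox; rewrite leqn0 => /eqP o0; have := order_gt0 x; rewrite o0.
have E : \sum_(g in <[x]>%g) ee g ^+ j = \sum_(H in [set <[g]>%g | g in <[x]>%g])
   \sum_(i in <[x]>%g | <[i]>%g == H) ee i ^+ j by apply: partition_big_imset.
rewrite (bigD1 <[x]>%g) /= in E; last by apply/imsetP; exists x; rewrite ?cycle_id.
have Ein : \sum_(i in <[x]>%g | <[i]>%g == <[x]>%g) ee i ^+ j =
           \sum_(g | <[g]>%g == <[x]>%g) ee g ^+ j.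
  apply: eq_bigl => g; apply/andP/idP => [[] //|hg]; split => //.
  by move/eqP: hg => <-; rewrite cycle_id.
rewrite Ein in E.
have -> : \sum_(g | <[g]>%g == <[x]>%g) ee g ^+ j =
  \sum_(g in <[x]>%g) ee g ^+ j -
  \sum_(H in [set <[g]>%g | g in <[x]>%g] | H != <[x]>%g)
     \sum_(i in <[x]>%g | <[i]>%g == H) ee i ^+ j.
  by rewrite E addrK.
apply: rpredB; first exact: cyc_int.
apply: rpred_sum => H /andP[/imsetP[g0 g0x ->] ne].
have -> : \sum_(i in <[x]>%g | <[i]>%g == <[g0]>%g) ee i ^+ j =
          \sum_(i | <[i]>%g == <[g0]>%g) ee i ^+ j.
  apply: eq_bigl => g; apply/andP/idP => [[] //|hg]; split => //.
  move/eqP: hg => hg; have : g \in <[g0]>%g by rewrite -hg cycle_id.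
  by apply: subsetP; rewrite cycle_subG.
apply: IH; rewrite -ltnS; apply: leq_trans ox.
apply: proper_card; rewrite properEneq ne cycle_subG g0x.
done.
Qed.

Lemma BM_int j : cl_closed X -> FF j \in Num.int.
Proof.
move=> cX; rewrite /FF.
rewrite (partition_big_imset (fun g => <[g]>%g) (mem X)).
apply: rpred_sum => H /imsetP[g0 g0X ->].
have -> : \sum_(i in X | <[i]>%g == <[g0]>%g) ee i ^+ j =
          \sum_(i | <[i]>%g == <[g0]>%g) ee i ^+ j.
  apply: eq_bigl => g; apply/andP/idP => [[] //|hg]; split => //.
  by move/eqP: hg => hg; apply: cX _ _ g0X (esym hg).
exact: (class_int _ (leqnn _)).
Qed.

End BM.


Section Sets.
Variable n : nat.
Hypothesis hn : (0 < n)%N.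
Local Notation N := (n.*2).
Local Notation a := (U6a n).
Local Notation b := (U6b n).

Lemma U6sg0r (e : 'Z_3) : U6sg (0 : 'Z_N) e = e.
Proof. by []. Qed.

Lemma eAb k : (a ^+ k * b)%g = (k%:R, 1).
Proof.
rewrite expa; change (@U6mul n (k%:R, 0) (0, 1) = (k%:R, 1)).
by rewrite /U6mul /= addr0 add0r.
Qed.

Lemma eb2 : (b ^+ 2)%g = (0, 1 + 1).
Proof.
rewrite expgS expg1; change (@U6mul n (0, 1) (0, 1) = (0, 1 + 1)).
by rewrite /U6mul /= addr0.
Qed.

Lemma eAb2 k : (a ^+ k * b ^+ 2)%g = (k%:R, 1 + 1).
Proof.
rewrite expa eb2; change (@U6mul n (k%:R, 0) (0, 1 + 1) = (k%:R, 1 + 1)).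
by rewrite /U6mul /= addr0 add0r.
Qed.

Lemma eAVb2 k : (a ^- k * b ^+ 2)%g = (- k%:R, 1 + 1).
Proof.
rewrite expa eb2; change (@U6mul n (@U6inv n (k%:R, 0)) (0, 1 + 1) = (- k%:R, 1 + 1)).
by rewrite /U6mul /U6inv /= U6sg0 oppr0 addr0 add0r.
Qed.

Lemma Z3cases (e : 'Z_3) : e = 0 \/ e = 1 \/ e = 1 + 1.
Proof.
case: e => [[|[|[|m]]] Hm]; [left | right; left | right; right | by []];
  by apply: val_inj.
Qed.

Lemma Z3_10 : (1 : 'Z_3) != 0. Proof. by []. Qed.
Lemma Z3_20 : (1 + 1 : 'Z_3) != 0. Proof. by []. Qed.
Lemma Z3_21 : (1 + 1 : 'Z_3) != 1. Proof. by []. Qed.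

Lemma oddZ k : odd (val (k%:R : 'Z_N)) = odd k.
Proof.
change (odd (nat_of_ord (k%:R : 'Z_N)) = odd k).
rewrite (val_Zp_nat (N_gt1 hn)) odd_mod //.
by rewrite odd_double.
Qed.

Lemma oddN (i : 'Z_N) : odd (val (- i)) = odd (val i).
Proof.
have := U6_oddD (i) (- i); rewrite addrN /=.
by case: (odd (val i)); case: (odd (val (- i))).
Qed.

Variables R H : {set 'I_n}.

Definition S1d : {set U6 n} :=
    ([set a ^+ (2 * r)%N | r : 'I_n in R] :|: [set a ^+ (2 * r)%N * b | r : 'I_n in R]
      :|: [set a ^- (2 * r)%N * b ^+ 2 | r : 'I_n in R])%g.
Definition S2d : {set U6 n} :=
    ([set a ^+ (2 * h + 1)%N | h : 'I_n in H] :|: [set a ^+ (2 * h + 1)%N * b | h : 'I_n in H]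
      :|: [set a ^+ (2 * h + 1)%N * b ^+ 2 | h : 'I_n in H])%g.
Definition SRd : {set U6 n} := [set (a ^+ (2 * r)%N)%g | r : 'I_n in R].
Definition SHd : {set U6 n} := [set (a ^+ (2 * h + 1)%N)%g | h : 'I_n in H].

Definition Ep (i : 'Z_N) := exists2 r : 'I_n, r \in R & i = (2 * r)%N%:R.
Definition Op (i : 'Z_N) := exists2 h : 'I_n, h \in H & i = (2 * h + 1)%N%:R.

Lemma memS1 (g : U6 n) : g \in S1d <-> exists2 r : 'I_n, r \in R &
   [\/ g = ((2 * r)%N%:R, 0), g = ((2 * r)%N%:R, 1) | g = (- (2 * r)%N%:R, 1 + 1)].
Proof.
split.
  case/setUP => [/setUP[] |] /imsetP[r rR ->]; exists r => //.
  - by apply: Or31; rewrite expa.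
  - by apply: Or32; rewrite eAb.
  - by apply: Or33; rewrite eAVb2.
case=> r rR [] ->; rewrite !inE.
- by apply/orP; left; apply/orP; left; apply/imsetP; exists r; rewrite ?expa.
- by apply/orP; left; apply/orP; right; apply/imsetP; exists r; rewrite ?eAb.
- by apply/orP; right; apply/imsetP; exists r; rewrite ?eAVb2.
Qed.

Lemma memS2 (g : U6 n) : g \in S2d <-> Op g.1.
Proof.
split.
  by case/setUP => [/setUP[] |] /imsetP[h hH ->]; exists h; rewrite ?eAb2 ?eAb ?expa.
    rewrite ?expa ?eAb ?eAb2.
case=> h hH; case: g => i e /= ->; rewrite !inE.
case: (Z3cases e) => [->|[->|->]].
- by apply/orP; left; apply/orP; left; apply/imsetP; exists h; rewrite ?expa.
- by apply/orP; left; apply/orP; right; apply/imsetP; exists h; rewrite ?eAb.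
- by apply/orP; right; apply/imsetP; exists h; rewrite ?eAb2.
Qed.

Lemma memX (g : U6 n) : g \in SRd :|: SHd <-> g.2 = 0 /\ (Ep g.1 \/ Op g.1).
Proof.
split.
  by case/setUP => /imsetP[r rR ->]; rewrite expa; split => //; [left|right]; exists r.
case: g => i e /= [-> [[r rR ->]|[h hH ->]]]; rewrite !inE.
  by apply/orP; left; apply/imsetP; exists r; rewrite ?expa.
by apply/orP; right; apply/imsetP; exists h; rewrite ?expa.
Qed.

Lemma Ep_even i : Ep i -> odd (val i) = false.
Proof. by case=> r _ ->; rewrite oddZ oddM. Qed.

Lemma Op_odd i : Op i -> odd (val i) = true.
Proof. by case=> h _ ->; rewrite oddZ oddD oddM. Qed.

Hypothesis hinv : ((S1d :|: S2d)^-1)%g = S1d :|: S2d.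

Lemma Ep_sym i : Ep i -> Ep (- i).
Proof.
move=> Ei.
have : ((i, 0) : U6 n) \in S1d :|: S2d.
  apply/setUP; left; apply/memS1; case: Ei => r rR ->; exists r => //; exact: Or31.
rewrite -memV_invg hinv.
change ((@U6inv n (i, 0)) \in S1d :|: S2d -> Ep (- i)).
rewrite /U6inv /= U6sg0 oppr0.
case/setUP => [/memS1[r rR []] | /memS2 /= /Op_odd].
- by case => ->; exists r.
- by case => _ /eqP.
- by case => _ /eqP.
by rewrite oddN (Ep_even Ei).
Qed.

Lemma hSP (g : U6 n) : (g \in S1d :|: S2d) = ((g.1, 0) \in SRd :|: SHd).
Proof.
apply/idP/idP.
  case/setUP => [/memS1[r rR hor] | /memS2 Og]; apply/memX; split => //=.
    case: hor => -> /=; left; try by exists r.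
    by apply: Ep_sym; exists r.
  by right.
case/memX => /= _ [Eg | Og]; last by apply/setUP; right; apply/memS2.
apply/setUP; left; apply/memS1.
case: g Eg => i e /= Eg.
case: (Z3cases e) => [->|[->|->]].
- by case: Eg => r rR ->; exists r => //; apply: Or31.
- by case: Eg => r rR ->; exists r => //; apply: Or32.
case: (Ep_sym Eg) => r rR hr; exists r => //; apply: Or33.
by rewrite -hr opprK.
Qed.

Lemma sX : SRd :|: SHd \subset <[a]>%g.
Proof.
by apply/subsetP => g /setUP[] /imsetP[r _ ->]; rewrite mem_cycle.
Qed.

End Sets.


Section Fin.
Variable n : nat.
Hypothesis hn : (0 < n)%N.
Local Notation N := (n.*2).

Lemma psi_sum (k : nat) (c : 'Z_N) : \sum_(e : 'Z_3) U6psi k ((c, e) : U6 n) = 0.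
Proof.
rewrite !big_ord_recl big_ord0 /U6psi /=.
by case: ifP => _ //; rewrite ?addr0 //; ring.
Qed.

Lemma char_sq0 (H : {set 'I_n}) k : char_sq (@U6psi n k) (S2d H) = 0.
Proof.
rewrite /char_sq; apply: big1 => x1 _.
rewrite big_mkcond /= (sumU6 (fun x => if x \in S2d H then U6psi k (x1 * x)%g else 0)).
apply: big1 => i _.
transitivity (((i, 0) \in S2d H)%:R * \sum_(e : 'Z_3) U6psi k (x1 * ((i, e) : U6 n))%g).
  rewrite mulr_sumr; apply: eq_bigr => e _.
  have -> : (((i, e) : U6 n) \in S2d H) = ((i, 0) \in S2d H).
    by apply/idP/idP => /memS2 /= h; apply/memS2.
  by case: ((i, 0) \in S2d H); rewrite ?mul1r ?mul0r.
set s := U6sg i x1.2.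
transitivity (((i, 0) \in S2d H)%:R * \sum_(e : 'Z_3) U6psi k ((x1.1 + i, s + e) : U6 n)).
  by [].
suff -> : \sum_(e : 'Z_3) U6psi k ((x1.1 + i, s + e) : U6 n) = 0 by rewrite mulr0.
transitivity (\sum_(e : 'Z_3) U6psi k ((x1.1 + i, e) : U6 n)); last exact: psi_sum.
by symmetry; rewrite (reindex_inj (addrI s)).
Qed.

Lemma lamFF (X : {set U6 n}) j : X \subset <[U6a n]>%g ->
  \sum_(m : 'Z_N) ((m, 0) \in X)%:R * eps m ^+ j = FF X j.
Proof.
move=> sXG; rewrite /FF [RHS]big_mkcond /= (sumU6 (fun x => if x \in X then ee x ^+ j else 0)).
apply: eq_bigr => i _.
rewrite (bigD1 0) //= big1 ?addr0.
  by case: ((i, 0) \in X); rewrite ?mul1r ?mul0r.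
move=> e ne; case: ifP => // iX.
by move: ne; have := inG2 (subsetP sXG _ iX); rewrite /= => ->; rewrite eqxx.
Qed.

End Fin.

End Helpers.
Import Helpers.

Theorem theorem4p7 (n : nat) (hn : (0 < n)%N) (R H : {set 'I_n}) :
  let a : U6 n := U6a n in
  let b : U6 n := U6b n in
  let S1 : {set U6 n} :=
    ([set a ^+ (2 * r)%N | r : 'I_n in R] :|: [set a ^+ (2 * r)%N * b | r : 'I_n in R]
      :|: [set a ^- (2 * r)%N * b ^+ 2 | r : 'I_n in R])%g in
  let S2 : {set U6 n} :=
    ([set a ^+ (2 * h + 1)%N | h : 'I_n in H] :|: [set a ^+ (2 * h + 1)%N * b | h : 'I_n in H]
      :|: [set a ^+ (2 * h + 1)%N * b ^+ 2 | h : 'I_n in H])%g in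
  let S : {set U6 n} := S1 :|: S2 in
  let SR : {set U6 n} := [set (a ^+ (2 * r)%N)%g | r : 'I_n in R] in
  let SH : {set U6 n} := [set (a ^+ (2 * h + 1)%N)%g | h : 'I_n in H] in
  (1 \notin S)%g -> (S^-1)%g = S ->
  (integral_graph (cayley_adj S) <->
     inB <[a]>%g (SR :|: SH) /\
     (forall k : 'I_n, exists m : int,
        (2 * char_sq (@U6psi n k) S2 = (m%:~R) ^+ 2)%R)).
Proof.
move=> a b S1 S2 S SR SH _ hinv.
have hS : forall g : U6 n, (g \in S) = ((g.1, 0%R) \in SR :|: SH) := hSP hn hinv.
have sXG : SR :|: SH \subset <[a]>%g by exact: sX.
have lamE j : lam (fun m => (m, 0%R) \in SR :|: SH) j = (3%:R * FF (SR :|: SH) j)%R.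
  by rewrite /lam (lamFF _ sXG).
have c2 : forall k : 'I_n, exists m : int,
    (2 * char_sq (@U6psi n k) S2 = (m%:~R) ^+ 2)%R.
  by move=> k; exists 0; rewrite (char_sq0 H k) mulr0 expr0n.
split.
  move=> hint; split; last exact: c2.
  apply: (closed_inB sXG); apply: (BM_closed hn sXG) => j.
  have := hint _ (@eig_lam n hn S (fun m => (m, 0%R) \in SR :|: SH) hS j); rewrite lamE => h3.
  have -> : FF (SR :|: SH) j = ((3%:R * FF (SR :|: SH) j) / 3%:R)%R.
    by rewrite [(3%:R * _)%R]mulrC mulfK // pnatr_eq0.
  by apply: rpred_div; [exact: rpred_int_num | exact: rpred_nat].
case=> hB _ x hx; have [_ cX] := inB_closed hB.
case: (@eig_cases n hn S (fun m => (m, 0%R) \in SR :|: SH) hS x hx) => [->|[j ->]]; first exact: rpred0.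
by rewrite lamE; apply: rpredM; [exact: rpred_nat | exact: BM_int].
Qed.
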